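(* For every $\epsilon>0$ there exists $k_0$ such that every zero-error variable-length $(k,N)$ network code for the network in the context with $k\ge k_0$ has rate $$\frac{k}{\mathrm E N\,\log_2|\mathcal Z|}\ \le\ \frac{8}{9}+\epsilon .$$ More precisely, every zero-error $(k,N)$ code satisfies $\frac{k}{\mathrm EN\log_2|\mathcal Z|}\le \frac{H(N)}{\mathrm EN\log_2|\mathcal Z|}+\frac{2}{2.25}$ up to a correction term vanishing as $k\to\infty$, where $2.25=H(\boldsymbol\Sigma(1))+0.75(\log_23-1)$.
   Context: Network: sources $s_1,s_2,s_3$, terminal $t$, edges $(s_3,s_1),(s_3,s_2),(s_1,t),(s_2,t)$; $s_j$ observes $\mathbf X_j\in\{0,1\}^k$, all $3k$ bits i.i.d. uniform on $\{0,1\}$; $s_1,s_2$ receive $\mathbf X_3$. $\mathcal Z$ is a finite alphabet, $|\mathcal Z|\ge2$. A variable-length $(k,N)$ network code: encoders $\phi_1,\phi_2:\{0,1\}^k\times\{0,1\}^k\to\mathcal Z^*$ (finite sequences over $\mathcal Z$) giving $\mathbf Z_1=\phi_1(\mathbf X_1,\mathbf X_3)$ on edge $(s_1,t)$ and $\mathbf Z_2=\phi_2(\mathbf X_2,\mathbf X_3)$ on edge $(s_2,t)$; a positive-integer-valued stopping time $N$ with $\mathrm EN<\infty$ for the sequence of pairs $(\mathbf Z_1(m),\mathbf Z_2(m))_{m\ge1}$; a decoder $\hat{\boldsymbol\Sigma}=\psi(\mathbf Z_1^N,\mathbf Z_2^N)\in\{0,1,2,3\}^k$ with $\mathbf Z_j^N$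 the first $N$ symbols. $\boldsymbol\Sigma=\mathbf X_1+\mathbf X_2+\mathbf X_3$ (componentwise integer sum); zero-error means $\Pr(\hat{\boldsymbol\Sigma}\neq\boldsymbol\Sigma)=0$. The rate of the code is $k/(\mathrm EN\log_2|\mathcal Z|)$ and the computing capacity $\mathcal C$ is the supremum of rates of zero-error codes. $H$ is Shannon entropy in bits. *)

(* Defs.v *)
From mathcomp Require Import all_boot.
From Stdlib Require Import Reals.
Set Implicit Arguments. Unset Strict Implicit. Unset Printing Implicit Defensive.

Definition bvec (k : nat) := {ffun 'I_k -> bool}.

(* an outcome (X1, X2, X3) of the 3k i.i.d. uniform bits:
   for x : outcome k, x.1.1 = X1, x.1.2 = X2, x.2 = X3 *)
Definition outcome (k : nat) := (bvec k * bvec k * bvec k)%type.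

(* A variable-length (k,N) network code over the alphabet Z:
   encoders phi1, phi2 (each sees its own source and X3), the stopping
   time N (as a random variable, i.e. a function of the outcome) and the
   decoder psi with values in {0,1,2,3}^k. *)
Record vl_code (Z : finType) (k : nat) := VLCode {
  phi1 : bvec k -> bvec k -> seq Z;
  phi2 : bvec k -> bvec k -> seq Z;
  stopN : outcome k -> nat;
  psi : seq Z -> seq Z -> {ffun 'I_k -> 'I_4}
}.

Definition Z1 (Z : finType) k (c : vl_code Z k) (x : outcome k) : seq Z :=
  phi1 c x.1.1 x.2.
Definition Z2 (Z : finType) k (c : vl_code Z k) (x : outcome k) : seq Z :=
  phi2 c x.1.2 x.2.

Definition Sigma k (x : outcome k) (i : 'I_k) : nat :=
  (nat_of_bool (x.1.1 i) + nat_of_bool (x.1.2 i) + nat_of_bool (x.2 i))%N.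

(* N is a positive-integer-valued stopping time for the sequence of pairs
   (Z1(m), Z2(m)), m >= 1: the first N symbols of both edges exist, and
   the event {N = n} is determined by the first n symbols of Z1 and Z2. *)
Definition is_stopping_time (Z : finType) k (c : vl_code Z k) : Prop :=
  (forall x, 0 < stopN c x)%N /\
  (forall x, stopN c x <= size (Z1 c x) /\ stopN c x <= size (Z2 c x))%N /\
  (forall (x x' : outcome k) (n : nat), stopN c x = n ->
     take n (Z1 c x) = take n (Z1 c x') ->
     take n (Z2 c x) = take n (Z2 c x') -> stopN c x' = n).

(* zero error: since all outcomes have positive probability (uniform),
   Pr(hat Sigma <> Sigma) = 0 iff the decoder is correct on every outcome. *)
Definition zero_error (Z : finType) k (c : vl_code Z k) : Prop :=
  is_stopping_time c /\
  forall (x : outcome k) (i : 'I_k),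
    nat_of_ord (psi c (take (stopN c x) (Z1 c x)) (take (stopN c x) (Z2 c x)) i)
    = Sigma x i.

Definition expN (Z : finType) k (c : vl_code Z k) : R :=
  (INR (\sum_(x : outcome k) stopN c x) / INR (2 ^ (3 * k)))%R.

Definition log2 (y : R) : R := (ln y / ln 2)%R.

Definition rate (Z : finType) k (c : vl_code Z k) : R :=
  (INR k / (expN c * log2 (INR #|Z|)))%R.

(* Main.v *)
Require Import Defs.
From mathcomp Require Import all_boot.
From Stdlib Require Import Reals.
From mathcomp Require Import ssrnat zify.
From Stdlib Require Import Lia Lra Psatz.
Set Implicit Arguments. Unset Strict Implicit. Unset Printing Implicit Defensive.

Lemma kraft (S A : finType) (f : S -> nat) (B : nat) :
  forall L (w : S -> seq A) (P : pred S),
  (forall x, P x -> size (w x) <= L) ->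
  (forall x y, P x -> P y -> prefix (w x) (w y) -> w x = w y) ->
  (forall s, \sum_(x | P x && (w x == s)) f x <= B) ->
  \sum_(x | P x) f x * #|A| ^ (L - size (w x)) <= B * #|A| ^ L.
Proof.
elim=> [|L IH] w P Hs Hp Hf.
  rewrite (eq_bigl (fun x => P x && (w x == [::]))); last first.
    move=> x; case Px: (P x) => //=; have := Hs x Px.
    by rewrite leqn0 size_eq0 => ->.
  rewrite -big_distrl /= leq_mul2r Hf orbT //.
case: (boolP [exists x, P x && (w x == [::])]).
  case/existsP=> x0 /andP [P0 /eqP w0].
  have Hall : forall x, P x -> w x = [::].
    move=> x Px; rewrite -w0; symmetry; apply: Hp => //; rewrite w0; by case: (w x).
  rewrite (eq_bigl (fun x => P x && (w x == [::]))); last first.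
    by move=> x; case Px: (P x) => //=; rewrite Hall ?eqxx.
  rewrite (eq_bigr (fun x => f x * #|A| ^ L.+1)); last first.
    by move=> x /andP [_ /eqP ->]; rewrite subn0.
  by rewrite -big_distrl /= leq_mul2r Hf orbT.
move=> Hne.
have Hne' : forall x, P x -> w x != [::].
  move=> x Px; apply/negP=> /eqP E; move/existsP: Hne; apply.
  by exists x; rewrite Px E eqxx.
case: (pickP P) => [x1 Px1|P0]; last first.
  by rewrite big_pred0.
have [a0 _] : exists a0 : A, True.
  by move: (Hne' x1 Px1); case: (w x1) => // a _ _; exists a.
rewrite (partition_big (fun x => head a0 (w x)) predT) //=.
apply: (@leq_trans (\sum_(a : A) B * #|A| ^ L)); last first.
  rewrite big_const iter_addn_0.
  by rewrite expnS mulnAC mulnA; exact: leqnn.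
apply: leq_sum => a _.
rewrite (eq_bigr (fun x => f x * #|A| ^ (L - size (behead (w x))))); last first.
  move=> x /andP [Px _]; move: (Hne' x Px); case: (w x) => //= b t _.
apply: (IH (fun x => behead (w x)) (fun x => P x && (head a0 (w x) == a))).
- move=> x /andP [Px _]; move: (Hs x Px) (Hne' x Px); case: (w x) => //=.
- move=> x y /andP [Px /eqP hx] /andP [Py /eqP hy].
  move: (Hp x y Px Py) (Hne' x Px) (Hne' y Py) hx hy.
  case: (w x) => // b t; case: (w y) => // b' t' /= H _ _ hx hy pt; subst.
  have := H; rewrite eqxx pt => /(_ isT); by case.
- move=> s; apply: leq_trans (Hf (a :: s)); rewrite leq_eqVlt; apply/orP; left.
  apply/eqP; apply: eq_bigl => x; case Px: (P x) => //=.
  by move: (Hne' x Px); case: (w x) => // b t _ /=; rewrite eqseq_cons eq_sym.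
Qed.

Section Code.
Variables (Z : finType) (k : nat) (c : vl_code Z k).
Hypothesis Hz : zero_error c.

Definition cw (x : outcome k) : seq (Z * Z) :=
  zip (take (stopN c x) (Z1 c x)) (take (stopN c x) (Z2 c x)).

Lemma take_zip (A B : Type) n (a : seq A) (b : seq B) :
  take n (zip a b) = zip (take n a) (take n b).
Proof.
by elim: n a b => [|n IH] [|x a] [|y b] //=; rewrite IH.
Qed.

Lemma Hst : is_stopping_time c. Proof. by case: Hz. Qed.

Lemma size_cw x : size (cw x) = stopN c x.
Proof.
case: Hst => _ [Hb _]; case: (Hb x) => h1 h2.
by rewrite /cw size_zip !size_takel // minnn.
Qed.

Lemma unzip_cw x : unzip1 (cw x) = take (stopN c x) (Z1 c x) /\
                   unzip2 (cw x) = take (stopN c x) (Z2 c x).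
Proof.
case: Hst => _ [Hb _]; case: (Hb x) => h1 h2.
by rewrite unzip1_zip ?unzip2_zip // !size_takel.
Qed.

Lemma cw_eq x x' : cw x = cw x' ->
  stopN c x = stopN c x' /\
  take (stopN c x) (Z1 c x) = take (stopN c x) (Z1 c x') /\
  take (stopN c x) (Z2 c x) = take (stopN c x) (Z2 c x').
Proof.
move=> E.
have EN : stopN c x = stopN c x' by rewrite -size_cw E size_cw.
have [a1 a2] := unzip_cw x; have [b1 b2] := unzip_cw x'.
by rewrite -a1 -a2 E b1 b2 EN.
Qed.

Lemma zip_inj (A B : Type) (a a' : seq A) (b b' : seq B) :
  size a = size b -> size a' = size b' -> zip a b = zip a' b' -> a = a' /\ b = b'.
Proof.
move=> h h' E; split.
  by rewrite -(unzip1_zip (eq_leq h)) E unzip1_zip // h'.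
by rewrite -(unzip2_zip (eq_leq (esym h))) E unzip2_zip // h'.
Qed.

Lemma cw_prefix x x' : prefix (cw x) (cw x') -> cw x = cw x'.
Proof.
rewrite prefixE => /eqP E.
have Hle : stopN c x <= stopN c x'.
  by rewrite -size_cw -E size_take_min size_cw geq_minr.
case: Hst => _ [Hb Hs]; case: (Hb x) => h1 h2; case: (Hb x') => h1' h2'.
move: E; rewrite size_cw /cw take_zip !take_takel // => E.
case: (zip_inj _ _ E); rewrite ?size_takel //; try exact: leq_trans h1'; try exact: leq_trans h2'.
move=> E1 E2.
have EN := Hs x x' _ erefl (esym E1) (esym E2).
by rewrite -EN in E *.
Qed.

Lemma sigma_eq x x' : cw x = cw x' -> forall i, Sigma x i = Sigma x' i.
Proof.
move=> E i; case: Hz => _ He.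
have [EN [E1 E2]] := cw_eq E.
by rewrite -(He x i) -(He x' i) -EN E1 E2.
Qed.

Lemma bits2 (p q q' r : bool) : (p + q + r = p + q' + r)%N -> q = q'.
Proof. by case: p; case: q; case: q'; case: r. Qed.

Lemma bits1 (p p' q r : bool) : (p + q + r = p' + q + r)%N -> p = p'.
Proof. by case: p; case: p'; case: q; case: r. Qed.

Lemma fiber x x' : cw x = cw x' -> x.2 = x'.2 -> x = x'.
Proof.
move: x x' => [[a b] d] [[a' b'] d'] /= E Ed; subst d'.
pose y : outcome k := ((a, b'), d).
have [EN [E1 E2]] := cw_eq E.
case: Hst => _ [_ Hs].
have Ny : stopN c y = stopN c ((a, b), d).
  by apply: (Hs ((a, b), d) y _ erefl) => //.
have Ey : cw y = cw ((a, b), d).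
  by rewrite /cw Ny E2.
have Eb : b' = b.
  by apply/ffunP => i; apply: (@bits2 (a i) _ _ (d i)); have := sigma_eq Ey i.
subst b'.
have Ea : a = a'.
  by apply/ffunP => i; apply: (@bits1 _ _ (b i) (d i)); have := sigma_eq E i.
by subst a'.
Qed.

Definition alleq (x : outcome k) (i : 'I_k) : bool :=
  (x.1.1 i == x.2 i) && (x.1.2 i == x.2 i).
Definition mm (x : outcome k) := #|[pred i : 'I_k | ~~ alleq x i]|.

Lemma alleq_sigma x i : alleq x i = (Sigma x i == 0) || (Sigma x i == 3).
Proof. by rewrite /alleq /Sigma; case: (x.1.1 i); case: (x.1.2 i); case: (x.2 i). Qed.

Lemma x3_alleq x i : alleq x i -> x.2 i = (Sigma x i == 3).
Proof. by rewrite /alleq /Sigma; case: (x.1.1 i); case: (x.1.2 i); case: (x.2 i). Qed.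

Lemma mm_le x : mm x <= k.
Proof. by rewrite /mm; apply: leq_trans (max_card _) _; rewrite card_ord. Qed.

Lemma fiber_count s : \sum_(x | cw x == s) 2 ^ (k - mm x) <= 2 ^ k.
Proof.
case: (pickP (fun x => cw x == s)) => [x0 /eqP H0|P0]; last by rewrite big_pred0.
have Hall : forall x, cw x == s -> forall i, Sigma x i = Sigma x0 i.
  by move=> x H; apply: sigma_eq; rewrite (eqP H) H0.
have Hm : forall x, cw x == s -> mm x = mm x0.
  by move=> x H; apply: eq_card => i; rewrite !inE !alleq_sigma (Hall x H).
rewrite (eq_bigr (fun _ => 2 ^ (k - mm x0))); last by move=> x /Hm ->.
rewrite (@sum_nat_const _ [pred x | cw x == s]).
pose f (x : outcome k) : {ffun {i : 'I_k | ~~ alleq x0 i} -> bool} :=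
  [ffun j => x.2 (val j)].
have Hc : #|[pred x | cw x == s]| <= 2 ^ mm x0.
  have := @leq_card_in _ _ f [pred x | cw x == s].
  rewrite card_ffun card_bool card_sig; apply=> x x'; rewrite !inE => Hx Hx' Hf.
  apply: fiber; first by rewrite (eqP Hx) (eqP Hx').
  apply/ffunP => i; case Ai: (alleq x0 i).
    have Ax : alleq x i by rewrite alleq_sigma (Hall x Hx) -alleq_sigma.
    have Ax' : alleq x' i by rewrite alleq_sigma (Hall x' Hx') -alleq_sigma.
    by rewrite (x3_alleq Ax) (x3_alleq Ax') (Hall x Hx) (Hall x' Hx').
  move/ffunP: Hf => /(_ (exist _ i (negbT Ai))).
  by rewrite !ffunE.
apply: leq_trans (leq_mul Hc (leqnn _)) _.
by rewrite -expnD subnKC // mm_le.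
Qed.

End Code.

Section Count.
Variables (k : nat) (i : 'I_k).

Definition flip (v : bvec k) : bvec k := [ffun j => if j == i then ~~ v j else v j].
Lemma flipK : cancel flip flip.
Proof. by move=> v; apply/ffunP => j; rewrite !ffunE; case: (j == i); rewrite ?negbK. Qed.
Lemma flip_i v : flip v i = ~~ v i.
Proof. by rewrite ffunE eqxx. Qed.

Definition g1 (x : outcome k) : outcome k := ((flip x.1.1, x.1.2), x.2).
Definition g2 (x : outcome k) : outcome k := ((x.1.1, flip x.1.2), x.2).
Lemma g1K : cancel g1 g1. Proof. by case=> [[a b] d]; rewrite /g1 /= flipK. Qed.
Lemma g2K : cancel g2 g2. Proof. by case=> [[a b] d]; rewrite /g2 /= flipK. Qed.

Lemma sumT (T : finType) : \sum_(x : T) 1 = #|T|.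
Proof. by rewrite big_const iter_addn_0 mul1n. Qed.

Lemma count_alleq : 4 * \sum_(x : outcome k) (alleq x i : nat) = #|{: outcome k}|.
Proof.
pose A (x : outcome k) := x.1.1 i == x.2 i.
pose B (x : outcome k) := x.1.2 i == x.2 i.
have e1 : \sum_x ((A x && B x) : nat) = \sum_x ((~~ A x && B x) : nat).
  rewrite (reindex_inj (can_inj g1K)); apply: eq_bigr => x _.
  by rewrite /A /B /g1 /= flip_i; case: (x.1.1 i); case: (x.2 i).
have e2 : \sum_x ((A x && B x) : nat) + \sum_x ((~~ A x && B x) : nat) = \sum_x (B x : nat).
  by rewrite -big_split; apply: eq_bigr => x _; case: (A x); case: (B x).
have e3 : \sum_x (B x : nat) = \sum_x (~~ B x : nat).
  rewrite (reindex_inj (can_inj g2K)); apply: eq_bigr => x _.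
  by rewrite /B /g2 /= flip_i; case: (x.1.2 i); case: (x.2 i).
have e4 : \sum_x (B x : nat) + \sum_x (~~ B x : nat) = #|{: outcome k}|.
  by rewrite -big_split -sumT; apply: eq_bigr => x _; case: (B x).
have -> : \sum_(x : outcome k) (alleq x i : nat) = \sum_x ((A x && B x) : nat) by [].
lia.
Qed.

End Count.

Lemma count_mm k : 4 * \sum_(x : outcome k) mm x = 3 * k * #|{: outcome k}|.
Proof.
have Hm : forall x : outcome k, mm x = \sum_(i : 'I_k) (~~ alleq x i : nat).
  move=> x; rewrite /mm -sum1_card big_mkcond /=; apply: eq_bigr => i _.
  by rewrite inE; case: (alleq x i).
rewrite (eq_bigr _ (fun x _ => Hm x)) exchange_big big_distrr /=.
rewrite (eq_bigr (fun _ => 3 * #|{: outcome k}|)); last first.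
  move=> i _; have := count_alleq i.
  have : \sum_(x : outcome k) (alleq x i : nat) + \sum_x (~~ alleq x i : nat) = #|{: outcome k}|.
    by rewrite -big_split -sumT; apply: eq_bigr => x _; case: (alleq x i).
  move=> h1 h2; move: h1 h2 => /eqP h1 /eqP h2; apply/eqP; move: h1 h2; set E := \sum_(x : outcome k) (alleq x i : nat); set F := \sum_(x : outcome k) (~~ alleq x i : nat); set T := #|_|. lia.
by rewrite big_const_ord iter_addn_0 mulnAC.
Qed.

Lemma sum_ineq (T : Type) (l : seq T) (g h t : T -> nat) (al be ga de : R) :
  (forall x, al + be * INR (g x) + ga * INR (h x) <= de * INR (t x) - 1)%R ->
  (al * INR (\sum_(x <- l) 1) + be * INR (\sum_(x <- l) g x)
     + ga * INR (\sum_(x <- l) h x)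
   <= de * INR (\sum_(x <- l) t x) - INR (\sum_(x <- l) 1))%R.
Proof.
move=> H; elim: l => [|x l IH]; first by rewrite !big_nil /=; lra.
rewrite !big_cons !plus_INR /=; have := H x; lra.
Qed.

Lemma ln_le (y : R) : (0 < y)%R -> (ln y <= y - 1)%R.
Proof. move=> hy; have := exp_ineq1_le (ln y); rewrite exp_ln //; lra. Qed.

Lemma final_real (k Mc S l2 lz : R) : (0 < Mc)%R -> (0 < S)%R -> (0 < l2)%R -> (0 < lz)%R ->
  (0 <= k)%R -> (9/4*k*Mc*l2 <= 2*S*lz)%R -> (k / (S / Mc * (lz / l2)) <= 8/9)%R.
Proof.
move=> hM hS h2 hz hk H.
have -> : (k / (S / Mc * (lz / l2)) = k*Mc*l2/(S*lz))%R by field; lra.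
apply (Rmult_le_reg_r (S*lz)); first nra.
have -> : (k*Mc*l2/(S*lz) * (S*lz) = k*Mc*l2)%R by field; lra.
nra.
Qed.

Lemma powE (m n : nat) : Nat.pow m n = expn m n.
Proof. by elim: n => //= n IH; rewrite expnS IH. Qed.

Theorem mainTheorem13 (Z : finType) (hZ : (1 < #|Z|)%N) (eps : R) (heps : (0 < eps)%R) :
  exists k0 : nat, forall (k : nat), (k0 <= k)%N ->
    forall c : vl_code Z k, zero_error c ->
      (rate c <= 8 / 9 + eps)%R.
Proof.
exists 0%N => k _ c Hz.
pose Mc := #|{: outcome k}|.
have HMc : Mc = 2 ^ (3 * k).
  rewrite /Mc !card_prod !card_ffun card_bool card_ord -!expnD; congr (_ ^ _); lia.
pose L := \max_(x : outcome k) stopN c x.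
pose Q := #|{: Z * Z}|.
have HQ : Q = (#|Z| * #|Z|)%N by rewrite /Q card_prod.
have HK := @kraft (outcome k) (Z * Z)%type (fun x => 2 ^ (k - mm x)) (2 ^ k) L (cw c) predT
   (fun x _ => eq_ind_r (fun n => n <= L) (leq_bigmax (F := fun x => stopN c x) x) (size_cw Hz x))
   (fun x y _ _ => @cw_prefix _ _ _ Hz x y) (fun s => fiber_count Hz s).
pose t x := (2 ^ (k - mm x) * Q ^ (L - stopN c x))%N.
pose D := (2 ^ k * Q ^ L)%N.
have HT : (\sum_(x : outcome k) t x <= D)%N.
  apply: leq_trans HK; rewrite leq_eqVlt; apply/orP; left; apply/eqP.
  by apply: eq_bigr => x _; rewrite size_cw.
have Q0 : (0 < Q)%N by rewrite HQ muln_gt0; apply/andP; split; apply: ltn_trans hZ.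
have HD : (0 < INR D)%R by apply: lt_0_INR; apply/ltP; rewrite muln_gt0 !expn_gt0 Q0.
have HM : (0 < INR Mc)%R by rewrite HMc; apply: lt_0_INR; apply/ltP; rewrite expn_gt0.
have E2 : INR 2 = 2%R by simpl; lra.
have Hl2 : (0 < ln (INR 2))%R by rewrite -ln_1 E2; apply: ln_increasing; lra.
have HQR : (0 < INR Q)%R by apply: lt_0_INR; apply/ltP.
have HI := @sum_ineq _ (index_enum (outcome k)) (@mm k) (fun x => stopN c x) t
  (ln (INR Mc)) (- ln (INR 2)) (- ln (INR Q)) (INR Mc / INR D).
have Hel : forall x, (ln (INR Mc) + - ln (INR 2) * INR (mm x) + - ln (INR Q) * INR (stopN c x)
    <= INR Mc / INR D * INR (t x) - 1)%R.
  move=> x.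
  have hN : (stopN c x <= L)%N by apply: (leq_bigmax (F := fun x => stopN c x)).
  have hm := mm_le x.
  pose a := (2 ^ mm x * Q ^ stopN c x)%N.
  have Eta : (t x * a = D)%N by rewrite /t /a mulnACA -!expnD !subnK.
  have Ha : (0 < INR a)%R by apply: lt_0_INR; apply/ltP; rewrite muln_gt0 !expn_gt0 Q0.
  have Ey : (INR Mc / INR D * INR (t x) = INR Mc / INR a)%R.
    have Ht : (0 < INR (t x))%R by apply: lt_0_INR; apply/ltP; rewrite muln_gt0 !expn_gt0 Q0.
    rewrite -Eta mult_INR. field; split; lra.
  have La : ln (INR a) = (INR (mm x) * ln (INR 2) + INR (stopN c x) * ln (INR Q))%R.
    rewrite /a mult_INR -!powE !pow_INR ln_mult; try (apply: pow_lt; lra).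
    rewrite !ln_pow //; lra.
  have Ly : ln (INR Mc / INR a) = (ln (INR Mc) - ln (INR a))%R.
    rewrite /Rdiv ln_mult; [|lra|by apply: Rinv_0_lt_compat]; rewrite ln_Rinv //; lra.
  rewrite Ey; have := ln_le (y := (INR Mc / INR a)%R).
  rewrite Ly La => H; have := H (Rdiv_lt_0_compat _ _ HM Ha); lra.
have {}HI := HI Hel.
rewrite sumT in HI.
have HTD : (INR Mc / INR D * INR (\sum_(x : outcome k) t x) <= INR Mc)%R.
  apply: Rle_trans (_ : INR Mc / INR D * INR D <= _)%R.
    apply: Rmult_le_compat_l; first by apply: Rlt_le; apply: Rdiv_lt_0_compat.
    by apply: le_INR; apply/leP.
  by apply: Req_le; field; lra.
have HS4 := congr1 INR (count_mm k).
rewrite !mult_INR in HS4.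
have LM : ln (INR Mc) = (INR (3 * k) * ln (INR 2))%R.
  by rewrite HMc -powE pow_INR ln_pow //; lra.
have LQ : ln (INR Q) = (2 * ln (INR #|Z|))%R.
  rewrite HQ mult_INR ln_mult; [lra| |]; apply: lt_0_INR; apply/ltP; exact: ltn_trans hZ.
rewrite LM LQ mult_INR in HI.
have HZ1 : (1 < INR #|Z|)%R by apply: lt_1_INR; apply/ltP.
have Hlz : (0 < ln (INR #|Z|))%R by rewrite -ln_1; apply: ln_increasing; lra.
have HS : (0 < INR (\sum_(x : outcome k) stopN c x))%R.
  apply: lt_0_INR; apply/ltP; apply: leq_trans (_ : 0 < \sum_(x : outcome k) 1)%N _.
    by rewrite sumT -/Mc HMc expn_gt0.
  by apply: leq_sum => x _; case: Hz => [[H0 _] _]; exact: H0.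
rewrite /rate /expN /log2 powE -HMc -E2.
apply: Rle_trans (_ : 8 / 9 <= _)%R; last by lra.
apply: final_real => //; first exact: pos_INR.
have E3 : INR 3 = 3%R by simpl; lra.
have E4 : INR 4 = 4%R by simpl; lra.
rewrite E3 E4 in HS4 HI.
have H2 : (ln (INR 2) * INR (\sum_(x : outcome k) mm x) = ln (INR 2) * (3 * INR k * INR Mc / 4))%R.
  by congr (_ * _)%R; rewrite /Mc; lra.
rewrite /Mc in H2 HTD HI *.
move: H2 HTD HI.
set A := INR (\sum_(x : outcome k) mm x).
set B := INR (\sum_(x : outcome k) stopN c x).
set T := INR (\sum_(x : outcome k) t x).
set Mr := INR #|_|.
set W := (Mr / INR D * T)%R.
set l2 := ln (INR 2).
set lz := ln (INR #|Z|).
set kk := INR k.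
move=> *; nra.
Qed.
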